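(* Let $s\ge 1$, $q=4^{2s}$, and let $\theta$ be the automorphism of $F_q$ given by $\theta(a)=a^{4^s}$. Let $n$ be an even positive integer and suppose $x^n-1=h(x)g(x)$ in $F_q[x;\theta]$, where the degree of $g(x)$ is even. If $h(x)$ is a palindromic polynomial, then $g(x)$ is also a palindromic polynomial.
   Context: $F_q[x;\theta]$ is the skew polynomial ring: polynomials $\sum a_ix^i$ with $a_i\in F_q$, usual addition, and multiplication determined by $xa=\theta(a)x$ for $a\in F_q$. A polynomial $f(x)=a_0+a_1x+\dots+a_tx^t$ of degree $t$ is palindromic if $a_i=a_{t-i}$ for all $i\in\{0,\ldots,t\}$. *)

(* Defs.v *)
From HB Require Import structures.
From mathcomp Require Import all_boot all_algebra all_field.
Set Implicit Arguments. Unset Strict Implicit. Unset Printing Implicit Defensive.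
Import GRing.Theory.
Local Open Scope ring_scope.

(* Skew polynomials F[x; theta] are represented by their coefficient
   sequences, stored in {poly F} (so addition, 'X^n, constants, size,
   coefficients are the usual ones).  The skew product is defined by
   x a = theta(a) x, i.e. (a x^i)(b x^j) = a theta^i(b) x^(i+j). *)
Definition skmul (F : ringType) (theta : F -> F) (p q : {poly F}) : {poly F} :=
  \poly_(k < (size p + size q).-1)
     \sum_(i < k.+1) p`_i * iter i theta q`_(k - i).

Definition palindromic (F : ringType) (p : {poly F}) : Prop :=
  forall i : nat, (i <= (size p).-1)%N -> p`_i = p`_((size p).-1 - i).

(* Main.v *)
Require Import Defs.
From HB Require Import structures.
From mathcomp Require Import all_boot all_algebra all_field.
From mathcomp Require Import zify.
Import GRing.Theory.
Set Implicit Arguments. Unset Strict Implicit.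
Local Open Scope ring_scope.

Section S.
Variable F : fieldType.
Variable th : F -> F.
Hypothesis th0 : th 0 = 0.
Hypothesis thK : forall a, th (th a) = a.

Definition Ssum (a b : nat -> F) k := \sum_(i < k.+1) a i * iter i th (b (k - i)%N).

Lemma iter0 i : iter i th 0 = 0.
Proof. by elim: i => //= i ->. Qed.

Lemma iter_odd i a : iter i th a = if odd i then th a else a.
Proof. elim: i => //= i ->; case: (odd i) => //=. Qed.

Lemma coef_skmul (p q : {poly F}) k :
  (skmul th p q)`_k = Ssum (fun i => p`_i) (fun i => q`_i) k.
Proof.
rewrite /skmul coef_poly /Ssum; case: ifP => // hk.
rewrite big1 // => i _.
have [hp|hp] := leqP (size p) i; first by rewrite nth_default // mul0r.
rewrite (@nth_default _ _ q) ?iter0 ?mulr0 //.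
move/negbT: hk; rewrite -leqNgt -subn1 => hk; move: hp hk; move: (nat_of_ord i) (size p) (size q) => j a b. lia.
Qed.

Lemma S_cancel (h u v : nat -> F) : h 0%N != 0 ->
  (forall k, Ssum h u k = Ssum h v k) -> forall k, u k = v k.
Proof.
move=> h0 E k; elim: k {-2}k (leqnn k) => [|K IH] k hk.
  have := E 0%N; rewrite /Ssum !big_ord_recl !big_ord0 /= !addr0.
  move/(mulfI h0); have -> : k = 0%N by lia. by [].
have := E k; rewrite /Ssum !big_ord_recl /= subn0.
rewrite (eq_bigr (fun i : 'I_k => h (lift ord0 i) * iter (lift ord0 i) th (v (k - lift ord0 i)%N))).
  by move/addIr/(mulfI h0).
move=> i _; rewrite IH //=; have := ltn_ord i; rewrite /bump /=; lia.
Qed.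
Lemma Ssum_t (a b : nat -> F) t k : (forall i, (t < i)%N -> a i = 0) ->
  Ssum a b k = \sum_(i < t.+1) (if (i <= k)%N then a i * iter i th (b (k - i)%N) else 0).
Proof.
move=> ha; rewrite /Ssum.
rewrite (big_ord_widen (k + t).+1 (fun i => a i * iter i th (b (k - i)%N))); last lia.
rewrite (big_ord_widen (k + t).+1 (fun i => if (i <= k)%N then a i * iter i th (b (k - i)%N) else 0)); last lia.
rewrite big_mkcond [RHS]big_mkcond; apply: eq_bigr => i _.
case: (ltnP i k.+1) => hik; case: (ltnP i t.+1) => hit //=.
- by rewrite -ltnS hik.
- by rewrite ha ?mul0r.
- by rewrite leqNgt hik.
Qed.
End S.

Theorem theorem3 (s : nat) (F : finFieldType) (n : nat) (h g : {poly F}) :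
  (1 <= s)%N ->
  #|F| = (4 ^ (2 * s))%N ->
  (0 < n)%N -> ~~ odd n ->
  skmul (fun a : F => a ^+ (4 ^ s)) h g = 'X^n - 1 ->
  ~~ odd (size g).-1 ->
  palindromic h -> palindromic g.
Proof.
move=> s1 cardF n0 nev Hm gev hp.
set th := (fun a : F => a ^+ (4 ^ s)) in Hm.
have th0 : th 0 = 0 by rewrite /th expr0n expn_eq0.
have thK : forall a, th (th a) = a.
  move=> a; rewrite /th -exprM -expnD addnn -mul2n -cardF; exact: expf_card.
have thI : forall a, th a = 0 -> a = 0.
  by move=> a /eqP; rewrite /th expf_eq0 => /andP [_ /eqP].
have char2 : forall x : F, - x = x.
  move=> x; have := @card_finPcharP F 2 (4 * s) _ (isT : prime 2).
  rewrite cardF !expnM => /(_ erefl) /pcharf0 h2.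
  apply/eqP; rewrite eq_sym -addr_eq0 -mulr2n -mulr_natl h2 mul0r //.
set c := fun k => ('X^n - 1 : {poly F})`_k.
have cE : forall k, c k = (k == n)%:R - (k == 0%N)%:R.
  by move=> k; rewrite /c coefB coefXn coef1.
have E : forall k, Ssum th (fun i => h`_i) (fun i => g`_i) k = c k.
  by move=> k; rewrite /c -Hm (coef_skmul th0).
have E0 := E 0%N; rewrite /Ssum big_ord1 /= subn0 cE /= in E0.
have n0' : (0 == n) = false by lia.
have n0'' : (n == 0%N) = false by lia.
rewrite n0' sub0r in E0.
have h0 : h`_0 != 0.
  by apply/eqP => h0; rewrite h0 mul0r in E0; move/eqP: E0; rewrite eq_sym oppr_eq0 oner_eq0.
have g0 : g`_0 != 0.
  by apply/eqP => g0; rewrite g0 mulr0 in E0; move/eqP: E0; rewrite eq_sym oppr_eq0 oner_eq0.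
have szh : (0 < size h)%N.
  by rewrite lt0n size_poly_eq0; apply: contraNneq h0 => ->; rewrite coef0.
have szg : (0 < size g)%N.
  by rewrite lt0n size_poly_eq0; apply: contraNneq g0 => ->; rewrite coef0.
set t := (size h).-1 in hp *.
set m := (size g).-1 in gev *.
have hz : forall i, (t < i)%N -> h`_i = 0.
  by move=> i; rewrite /t => hi; rewrite nth_default //; apply: leq_trans hi; exact: leqSpred.
have gz : forall i, (m < i)%N -> g`_i = 0.
  by move=> i; rewrite /m => hi; rewrite nth_default //; apply: leq_trans hi; exact: leqSpred.
have ht : h`_t != 0.
  have := lead_coef_eq0 h; rewrite lead_coefE -/t => ->.
  by rewrite -size_poly_eq0 -lt0n.
have gm : g`_m != 0.
  have := lead_coef_eq0 g; rewrite lead_coefE -/m => ->.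
  by rewrite -size_poly_eq0 -lt0n.
have iterI : forall i a, iter i th a = 0 -> a = 0.
  by move=> i a; elim: i => //= i IH /thI /IH.
have hi : forall k, (t + m < k)%N -> c k = 0.
  move=> k hk; rewrite -E (@Ssum_t _ th _ _ t) //; apply: big1 => i _.
  case: ifP => // hik; rewrite gz ?(iter0 th0) ?mulr0 //; have := ltn_ord i; lia.
have htm : c (t + m)%N != 0.
  rewrite -E (@Ssum_t _ th _ _ t) // (bigD1 ord_max) //= leq_addr big1 ?addr0.
    rewrite mulf_eq0 negb_or ht /= addKn; apply/eqP => /iterI /eqP; exact/negP.
  move=> i /eqP hne; case: ifP => // _; rewrite gz ?(iter0 th0) ?mulr0 //.
  have := ltn_ord i; have : (nat_of_ord i != t) by apply/eqP => q; apply: hne; apply: val_inj.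
  move=> /eqP; lia.
have tmn : (t + m)%N = n.
  case: (ltngtP (t + m) n) => // hlt.
    by move: (hi n hlt); rewrite cE eqxx n0'' subr0 => /eqP; rewrite oner_eq0.
  move: htm; rewrite cE; have -> : (t + m == n) = false by lia.
  have -> : (t + m == 0)%N = false by lia.
  by rewrite /= mulr0n subrr eqxx.
have tev : ~~ odd t by move: nev gev; rewrite -tmn oddD; case: (odd t); case: (odd m).
set r := fun j => if (j <= m)%N then g`_(m - j) else 0.
have key : forall k, Ssum th (fun i => h`_i) r k = c k.
  move=> k; case: (leqP k n) => hkn.
    have -> : c k = c (n - k)%N.
      rewrite !cE; case: (eqVneq k 0%N) => [->|k0].
        by rewrite subn0 eqxx n0' n0'' /= mulr0n mulr1n subr0 sub0r char2.
      case: (eqVneq k n) => [->|kn].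
        by rewrite subnn eqxx n0' /= mulr0n mulr1n subr0 sub0r char2.
      have -> : (n - k == n)%N = false by lia.
      have -> : (n - k == 0)%N = false by lia.
      by rewrite ?(negbTE k0) ?(negbTE kn).
    rewrite -E !(@Ssum_t _ th _ _ t) //.
    rewrite [RHS](reindex_inj rev_ord_inj); apply: eq_bigr => j _ /=.
    have jt := ltn_ord j.
    rewrite subSS -/t.
    rewrite -hp; last exact: jt.
    rewrite !(iter_odd thK) oddB; last lia.
    rewrite (negbTE tev) /=.
    rewrite /r; case: (leqP j k) => hjk.
      case: (leqP (k - j) m) => hkj.
        have -> : (t - j <= n - k)%N = true by lia.
        by have -> : (n - k - (t - j) = m - (k - j))%N by lia.
      have -> : (t - j <= n - k)%N = false by lia.
      by rewrite th0 if_same mulr0.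
    have -> : (t - j <= n - k)%N = true by lia.
    rewrite gz; first by rewrite th0 if_same mulr0.
    lia.
  rewrite hi ?tmn // (@Ssum_t _ th _ _ t) //; apply: big1 => j _.
  rewrite /r; case: ifP => // hjk; case: ifP => hkm; last by rewrite (iter0 th0) mulr0.
  have := ltn_ord j; lia.
have rg := S_cancel h0 (fun k => etrans (key k) (esym (E k))).
by move=> i him; have := rg i; rewrite /r -/m him => ->.
Qed.
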